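(* Let $n,m,N$ be positive integers. Let $\mathcal{Q}_f\in\mathbb{R}^{n\times n}$ be symmetric positive definite and $\boldsymbol{b}\in\mathbb{R}^n$, and for each $i=1,\dots,N$ let $t_i>0$, let $\mathcal{R}_i\in\mathbb{R}^{m\times m}$ be symmetric positive definite, let $B_i\in\mathbb{R}^{n\times m}$ and $\boldsymbol{a}_i\in\mathbb{R}^m$. Set $T_0=0$ and $T_i=\sum_{j=1}^i t_j$. Let $P\colon[0,T_N]\to\mathbb{R}^{n\times n}$ and $q\colon[0,T_N]\to\mathbb{R}^n$ be the (continuous, piecewise smooth) solution of the piecewise Riccati ODE system $$\dot P(s) = -P(s)B_i\mathcal{R}_i^{-1}B_i^TP(s),\qquad \dot q(s) = -P(s)B_i\mathcal{R}_i^{-1}\big(B_i^Tq(s)-\boldsymbol{a}_i\big),\qquad s\in[T_{i-1},T_i),\ i=1,\dots,N,$$ with $P(0)=\mathcal{Q}_f$ and $q(0)=\boldsymbol{b}$, whose values at time $T_N$ are $$P(T_N)=\Big(\mathcal{Q}_f^{-1}+\sum_{i=1}^N t_iB_i\mathcal{R}_i^{-1}B_i^T\Big)^{-1},\qquad q(T_N)=P(T_N)\Big(\mathcal{Q}_f^{-1}\boldsymbol{b}+\sum_{i=1}^N t_iB_i\mathcal{R}_i^{-1}\boldsymbol{a}_i\Big).$$ Then the recursive least squares update is a discretization of this Riccati system: writing $P_i=P(T_i)$ and $q_i=q(T_i)$, for every $i=1,\dots,N$, $$P_i = P_{i-1} - t_iP_{i-1}B_i\big(\mathcal{R}_i + t_iB_i^TP_{i-1}B_i\big)^{-1}B_i^TP_{i-1},$$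 $$q_i = q_{i-1} + t_iP_iB_i\mathcal{R}_i^{-1}\boldsymbol{a}_i - t_iP_{i-1}B_i\big(\mathcal{R}_i + t_iB_i^TP_{i-1}B_i\big)^{-1}B_i^Tq_{i-1}.$$
   Context: The Riccati system arises from a regularized least-squares learning problem with $N$ data terms (weights $t_i$); $P(T_N)$ and $q(T_N)$ determine the learned minimizer, and the displayed recursion (obtained via the Woodbury identity) is the recursive least squares update for adding the $i$-th data term. *)

(* Defs.v *)
From HB Require Import structures.
From mathcomp Require Import all_boot all_order all_algebra.
From mathcomp Require Import all_classical all_reals all_analysis.
Set Implicit Arguments. Unset Strict Implicit. Unset Printing Implicit Defensive.
Import Order.TTheory GRing.Theory Num.Theory.
Local Open Scope ring_scope.

Definition sym_posdef (R : realType) (n : nat) (A : 'M[R]_n) : Prop :=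
  A^T = A /\ forall x : 'cV[R]_n, x != 0 -> 0 < (x^T *m A *m x) ord0 ord0.

(* T_k = t_1 + ... + t_k  (T_0 = 0); data are indexed 1..N *)
Definition Tsum (R : realType) (t : nat -> R) (k : nat) : R :=
  \sum_(1 <= j < k.+1) t j.

(* closed-form value of P at time T_k (the formula for P(T_N) applied to the
   system consisting of the first k data terms) *)
Definition Pcl (R : realType) (n m : nat) (Qf : 'M[R]_n) (t : nat -> R)
  (Rm : nat -> 'M[R]_m) (B : nat -> 'M[R]_(n, m)) (k : nat) : 'M[R]_n :=
  invmx (invmx Qf + \sum_(1 <= j < k.+1) t j *: (B j *m invmx (Rm j) *m (B j)^T)).

Definition qcl (R : realType) (n m : nat) (Qf : 'M[R]_n) (b : 'cV[R]_n)
  (t : nat -> R) (Rm : nat -> 'M[R]_m) (B : nat -> 'M[R]_(n, m))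
  (a : nat -> 'cV[R]_m) (k : nat) : 'cV[R]_n :=
  Pcl Qf t Rm B k *m
    (invmx Qf *m b + \sum_(1 <= j < k.+1) t j *: (B j *m invmx (Rm j) *m a j)).

(* Main.v *)
Require Import Defs.
From HB Require Import structures.
From mathcomp Require Import all_boot all_order all_algebra.
From mathcomp Require Import all_classical all_reals all_analysis.
Import Order.TTheory GRing.Theory Num.Theory numFieldNormedType.Exports.
Local Open Scope ring_scope.
Local Open Scope classical_set_scope.


Definition qf {R : realFieldType} {n} (A : 'M[R]_n) (x : 'cV[R]_n) := (x^T *m A *m x) ord0 ord0.
Definition pd {R : realFieldType} {n} (A : 'M[R]_n) := forall x, x != 0 -> 0 < qf A x.
Definition psd {R : realFieldType} {n} (A : 'M[R]_n) := forall x, 0 <= qf A x.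

Lemma qfD {R : realFieldType} {n} (A B : 'M[R]_n) x : qf (A + B) x = qf A x + qf B x.
Proof. by rewrite /qf mulmxDr mulmxDl mxE. Qed.
Lemma qfZ {R : realFieldType} {n} c (A : 'M[R]_n) x : qf (c *: A) x = c * qf A x.
Proof. by rewrite /qf -scalemxAr -scalemxAl mxE. Qed.
Lemma qf0 {R : realFieldType} n (x : 'cV[R]_n) : qf 0 x = 0.
Proof. by rewrite /qf mulmx0 mul0mx mxE. Qed.

Lemma pd_unit {R : realFieldType} {n} (A : 'M[R]_n) : pd A -> A \in unitmx.
Proof.
move=> hA; rewrite unitmxE unitfE; apply/negP => /det0P [v v0 vA].
have := hA v^T; rewrite trmx_eq0 => /(_ v0); rewrite /qf trmxK vA mul0mx mxE.
by rewrite ltxx.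
Qed.

Lemma pd_inv {R : realFieldType} {n} (A : 'M[R]_n) : pd A -> pd (invmx A).
Proof.
move=> hA x x0; have uA : A \in unitmx by apply: pd_unit.
have xE : x = A *m (invmx A *m x) by rewrite mulmxA mulmxV // mul1mx.
set y := invmx A *m x in xE.
have y0 : y != 0.
  by apply: contraNneq x0 => y0; rewrite xE y0 mulmx0.
rewrite xE; clearbody y.
rewrite /qf trmx_mul -!mulmxA [invmx A *m (A *m y)]mulmxA mulVmx // mul1mx.
have := hA y y0; rewrite /qf.
have e : y^T *m (A^T *m y) = (y^T *m A *m y)^T.
  by rewrite trmx_mul trmx_mul trmxK mulmxA.
by rewrite e [in X in _ -> X]mxE.
Qed.

Lemma pd_psd {R : realFieldType} {n} (A : 'M[R]_n) : pd A -> psd A.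
Proof.
move=> hA x; have [->|x0] := eqVneq x 0; last by apply/ltW/hA.
by rewrite /qf mulmx0 mxE.
Qed.

Lemma pd_psdD {R : realFieldType} {n} (A B : 'M[R]_n) : pd A -> psd B -> pd (A + B).
Proof. by move=> hA hB x x0; rewrite qfD; apply: ltr_wpDr; [apply: hB|apply: hA]. Qed.
Lemma psdD {R : realFieldType} {n} (A B : 'M[R]_n) : psd A -> psd B -> psd (A + B).
Proof. by move=> hA hB x; rewrite qfD; apply: addr_ge0. Qed.
Lemma psdZ {R : realFieldType} {n} c (A : 'M[R]_n) : 0 <= c -> psd A -> psd (c *: A).
Proof. by move=> hc hA x; rewrite qfZ; apply: mulr_ge0. Qed.
Lemma psd_conj {R : realFieldType} {p q} (C : 'M[R]_(p, q)) (A : 'M[R]_q) : psd A -> psd (C *m A *m C^T).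
Proof.
move=> hA x; have := hA (C^T *m x); rewrite /qf trmx_mul trmxK.
by rewrite !mulmxA.
Qed.

Lemma invmx_eq {R : realFieldType} {n} (A X : 'M[R]_n) : A *m X = 1%:M -> invmx A = X.
Proof.
move=> h; have [uA _] := mulmx1_unit h.
by rewrite -[invmx A]mulmx1 -h mulmxA mulVmx // mul1mx.
Qed.

Lemma woodbury {R : realFieldType} {n m} (M : 'M[R]_n) (Bm : 'M[R]_(n, m)) (Rm : 'M[R]_m) (t : R) :
  M \in unitmx -> Rm \in unitmx -> (Rm + t *: (Bm^T *m invmx M *m Bm)) \in unitmx ->
  let S := invmx (Rm + t *: (Bm^T *m invmx M *m Bm)) in
  invmx (M + t *: (Bm *m invmx Rm *m Bm^T)) =
  invmx M - t *: (invmx M *m Bm *m S *m Bm^T *m invmx M).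
Proof.
move=> uM uR uS S; apply: invmx_eq.
set X := invmx M.
have E : Bm *m invmx Rm *m Bm^T *m X - Bm *m S *m Bm^T *m X
   - t *: (Bm *m invmx Rm *m Bm^T *m X *m Bm *m S *m Bm^T *m X) = 0.
  have : Bm *m (invmx Rm *m (1%:M - (Rm + t *: (Bm^T *m X *m Bm)) *m S)) *m Bm^T *m X = 0.
    by rewrite mulmxV // subrr !mulmx0 !mul0mx.
  rewrite mulmxBr mulmxDl mulmx1 [invmx Rm *m (_ + _)]mulmxDr mulmxA mulVmx // mul1mx.
  rewrite opprD addrA !mulmxBr !mulmxBl. do ![rewrite -scalemxAl|rewrite -scalemxAr]; rewrite !mulmxA; exact: id.
rewrite mulmxDl !mulmxBr mulmxV // -/X.
rewrite -!scalemxAl -!scalemxAr !mulmxA mulmxV // mul1mx.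
rewrite -[RHS]addr0 -(scaler0 _ t) -E !scalerBr.
rewrite -addrA; congr (_ + _); by rewrite addrA [- _ + _]addrC.
Qed.

Theorem mainTheorem1 (R : realType) (n m N : nat)
  (Qf : 'M[R]_n) (b : 'cV[R]_n) (t : nat -> R) (Rm : nat -> 'M[R]_m)
  (B : nat -> 'M[R]_(n, m)) (a : nat -> 'cV[R]_m)
  (P : R -> 'M[R]_n) (q : R -> 'cV[R]_n) :
  (0 < n)%N -> (0 < m)%N -> (0 < N)%N ->
  sym_posdef Qf ->
  (forall i, (1 <= i <= N)%N -> 0 < t i) ->
  (forall i, (1 <= i <= N)%N -> sym_posdef (Rm i)) ->
  (* P, q: continuous, piecewise smooth solution of the Riccati system *)
  {within `[0, Tsum t N], continuous P} ->
  {within `[0, Tsum t N], continuous q} ->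
  P 0 = Qf -> q 0 = b ->
  (forall i s, (1 <= i <= N)%N -> Tsum t i.-1 < s < Tsum t i ->
     is_derive s 1 P (- (P s *m B i *m invmx (Rm i) *m (B i)^T *m P s))) ->
  (forall i s, (1 <= i <= N)%N -> Tsum t i.-1 < s < Tsum t i ->
     is_derive s 1 q (- (P s *m B i *m invmx (Rm i) *m ((B i)^T *m q s - a i)))) ->
  (* known closed form of the solution at the times T_k *)
  (forall k, (k <= N)%N -> P (Tsum t k) = Pcl Qf t Rm B k) ->
  (forall k, (k <= N)%N -> q (Tsum t k) = qcl Qf b t Rm B a k) ->
  forall i, (1 <= i <= N)%N ->
    let Pi := P (Tsum t i) in
    let Pp := P (Tsum t i.-1) in
    let qi := q (Tsum t i) in
    let qp := q (Tsum t i.-1) in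
    let S := invmx (Rm i + t i *: ((B i)^T *m Pp *m B i)) in
    Pi = Pp - t i *: (Pp *m B i *m S *m (B i)^T *m Pp) /\
    qi = qp + t i *: (Pi *m B i *m invmx (Rm i) *m a i)
            - t i *: (Pp *m B i *m S *m (B i)^T *m qp).
Proof.
move=> n0 m0 N0 [_ pdQ] tpos Rpd _ _ _ _ _ _ hPc hqc [//|k] hk.
move=> Pi Pp qi qp S; rewrite {}/S {}/Pi {}/Pp {}/qi {}/qp /=.
have kN : (k <= N)%N by case/andP: hk => _ /ltnW.
have k1N : (k.+1 <= N)%N by case/andP: hk.
have i1 : (0 < k.+1 <= N)%N by [].
rewrite !hPc // !hqc //.
have pdQ' : pd Qf by [].
have pdR : pd (Rm k.+1) by case: (Rpd _ i1).
set Ck := \sum_(1 <= j < k.+1) t j *: (B j *m invmx (Rm j) *m (B j)^T).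
have psdC : psd Ck.
  rewrite /Ck big_nat_cond; apply: big_rec; first by move=> x; rewrite qf0.
  move=> j A; rewrite andbT => /andP [j1 jk] hA; apply: psdD => //.
  have jN : (0 < j <= N)%N by rewrite j1 /= (leq_trans (ltnW jk)).
  apply: psdZ; first exact/ltW/tpos.
  apply: psd_conj; apply: pd_psd; apply: pd_inv; by case: (Rpd _ jN).
set Mk := invmx Qf + Ck.
have pdM : pd Mk by apply: pd_psdD => //; apply: pd_inv.
have uM : Mk \in unitmx by apply: pd_unit.
have uR : Rm k.+1 \in unitmx by apply: pd_unit.
set Bi := B k.+1.
have uS : Rm k.+1 + t k.+1 *: (Bi^T *m invmx Mk *m Bi) \in unitmx.
  apply: pd_unit; apply: pd_psdD => //; apply: psdZ; first exact/ltW/tpos.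
  have := psd_conj (Bi^T) (invmx Mk) (pd_psd _ (pd_inv _ pdM)); by rewrite trmxK.
have hP : Pcl Qf t Rm B k.+1 = Pcl Qf t Rm B k - t k.+1 *: (Pcl Qf t Rm B k *m Bi *m
     invmx (Rm k.+1 + t k.+1 *: (Bi^T *m Pcl Qf t Rm B k *m Bi)) *m Bi^T *m Pcl Qf t Rm B k).
  rewrite /Pcl big_nat_recr //= -/Ck addrA -/Mk -/Bi.
  exact: woodbury.
split; first exact: hP.
rewrite /qcl big_nat_recr //= addrA mulmxDr.
set v := invmx Qf *m b + _.
rewrite -scalemxAr !mulmxA.
rewrite {1}hP mulmxBl -scalemxAl.
by rewrite addrAC.
Qed.
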